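(* Let $C$ be a unital countably quantifier-free saturated C*-algebra and $B$ a separable C*-subalgebra of $C$. If $\Phi\colon B\to C$ is an approximately inner injective *-homomorphism, then there is a unitary $u\in C$ with $\Phi(b)=ubu^*$ for all $b\in B$.
   Context: $\Phi\colon B\to C$ is approximately inner if for every $\varepsilon>0$ and every finite $F\subseteq B$ there is a unitary $u\in C$ with $\|\Phi(a)-uau^*\|<\varepsilon$ for all $a\in F$. For $F\subseteq\mathbb R$, $\varepsilon>0$, $F_\varepsilon=\{x:\operatorname{dist}(x,F)\le\varepsilon\}$. $C$ is countably quantifier-free saturated if for every sequence $P_n(\bar x)$ of *-polynomials with coefficients in $C$ in variables $x_k$ ($k\in\mathbb N$) and compact $K_n\subseteq\mathbb R$, the following are equivalent: (i) there are $b_k$ in the unit ball of $C$ with $\|P_n(\bar b)\|\in K_n$ for all $n$; (ii) for every $m$ there are $b_k$ in the unit ball with $\|P_n(\bar b)\|\in(K_n)_{1/m}$ for all $n\le m$. *)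

(* Defs.v *)
From Stdlib Require Import Reals Lra List.
From Stdlib Require Import Rtopology.
Open Scope R_scope.

Record Cpx := mkC { cre : R; cim : R }.
Definition C0 : Cpx := mkC 0 0.
Definition C1 : Cpx := mkC 1 0.
Definition Cadd (a b : Cpx) : Cpx := mkC (cre a + cre b) (cim a + cim b).
Definition Cmul (a b : Cpx) : Cpx :=
  mkC (cre a * cre b - cim a * cim b) (cre a * cim b + cim a * cre b).
Definition Cconj (a : Cpx) : Cpx := mkC (cre a) (- cim a).
Definition Cabs (a : Cpx) : R := sqrt (cre a * cre a + cim a * cim a).

Record CstarAlgebra := {
  car :> Type;
  zero : car;
  add : car -> car -> car;
  opp : car -> car;
  mul : car -> car -> car;
  scal : Cpx -> car -> car;
  star : car -> car;
  norm : car -> R;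
  add_assoc : forall x y z, add x (add y z) = add (add x y) z;
  add_comm : forall x y, add x y = add y x;
  add_zero : forall x, add x zero = x;
  add_opp : forall x, add x (opp x) = zero;
  scal_one : forall x, scal C1 x = x;
  scal_assoc : forall a b x, scal a (scal b x) = scal (Cmul a b) x;
  scal_addr : forall a x y, scal a (add x y) = add (scal a x) (scal a y);
  scal_addl : forall a b x, scal (Cadd a b) x = add (scal a x) (scal b x);
  mul_assoc : forall x y z, mul x (mul y z) = mul (mul x y) z;
  mul_addr : forall x y z, mul x (add y z) = add (mul x y) (mul x z);
  mul_addl : forall x y z, mul (add x y) z = add (mul x z) (mul y z);
  mul_scall : forall a x y, mul (scal a x) y = scal a (mul x y);
  mul_scalr : forall a x y, mul x (scal a y) = scal a (mul x y);
  star_invol : forall x, star (star x) = x;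
  star_add : forall x y, star (add x y) = add (star x) (star y);
  star_scal : forall a x, star (scal a x) = scal (Cconj a) (star x);
  star_mul : forall x y, star (mul x y) = mul (star y) (star x);
  norm_eq0 : forall x, norm x = 0 -> x = zero;
  norm_triangle : forall x y, norm (add x y) <= norm x + norm y;
  norm_scal : forall a x, norm (scal a x) = Cabs a * norm x;
  norm_mul : forall x y, norm (mul x y) <= norm x * norm y;
  norm_cstar : forall x, norm (mul (star x) x) = norm x * norm x;
  complete : forall u : nat -> car,
    (forall eps, eps > 0 -> exists N, forall n m, (n >= N)%nat -> (m >= N)%nat ->
       norm (add (u n) (opp (u m))) < eps) ->
    exists l, forall eps, eps > 0 -> exists N, forall n, (n >= N)%nat ->
       norm (add (u n) (opp l)) < eps
}.

Arguments zero {c}. Arguments add {c}. Arguments opp {c}. Arguments mul {c}.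
Arguments scal {c}. Arguments star {c}. Arguments norm {c}.

Definition sub {A : CstarAlgebra} (x y : A) : A := add x (opp y).

Definition is_unit {A : CstarAlgebra} (e : A) : Prop :=
  forall x, mul e x = x /\ mul x e = x.

Definition unital (A : CstarAlgebra) : Prop := exists e : A, is_unit e.

Definition unitary {A : CstarAlgebra} (e u : A) : Prop :=
  mul (star u) u = e /\ mul u (star u) = e.

Definition converges_to {A : CstarAlgebra} (u : nat -> A) (l : A) : Prop :=
  forall eps, eps > 0 -> exists N, forall n, (n >= N)%nat -> norm (sub (u n) l) < eps.

Definition cstar_subalgebra {A : CstarAlgebra} (S : A -> Prop) : Prop :=
  S zero /\
  (forall x y, S x -> S y -> S (add x y)) /\
  (forall a x, S x -> S (scal a x)) /\
  (forall x y, S x -> S y -> S (mul x y)) /\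
  (forall x, S x -> S (star x)) /\
  (forall (u : nat -> A) l, (forall n, S (u n)) -> converges_to u l -> S l).

Definition separable_set {A : CstarAlgebra} (S : A -> Prop) : Prop :=
  exists d : nat -> A, (forall n, S (d n)) /\
    forall x, S x -> forall eps, eps > 0 -> exists n, norm (sub x (d n)) < eps.

(* Phi : S -> A is an injective *-homomorphism (values of Phi off S are irrelevant) *)
Definition injective_star_hom {A : CstarAlgebra} (S : A -> Prop) (Phi : A -> A) : Prop :=
  (forall x y, S x -> S y -> Phi (add x y) = add (Phi x) (Phi y)) /\
  (forall a x, S x -> Phi (scal a x) = scal a (Phi x)) /\
  (forall x y, S x -> S y -> Phi (mul x y) = mul (Phi x) (Phi y)) /\
  (forall x, S x -> Phi (star x) = star (Phi x)) /\
  (forall x y, S x -> S y -> Phi x = Phi y -> x = y).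

Definition approx_inner {A : CstarAlgebra} (e : A) (S : A -> Prop) (Phi : A -> A) : Prop :=
  forall eps, eps > 0 -> forall F : list A, (forall a, In a F -> S a) ->
    exists u : A, unitary e u /\
      forall a, In a F -> norm (sub (Phi a) (mul (mul u a) (star u))) < eps.

Inductive spoly (A : CstarAlgebra) : Type :=
| PVar : nat -> spoly A
| PCst : A -> spoly A
| PAdd : spoly A -> spoly A -> spoly A
| PScal : Cpx -> spoly A -> spoly A
| PMul : spoly A -> spoly A -> spoly A
| PStar : spoly A -> spoly A.

Fixpoint peval {A : CstarAlgebra} (b : nat -> A) (P : spoly A) : A :=
  match P with
  | PVar _ k => b k
  | PCst _ a => a
  | PAdd _ p q => add (peval b p) (peval b q)
  | PScal _ c p => scal c (peval b p)
  | PMul _ p q => mul (peval b p) (peval b q)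
  | PStar _ p => star (peval b p)
  end.

(* F_eps = { x | dist(x,F) <= eps }, with dist(x,F) = inf_{y in F} |x-y|
   (so dist(x, empty) = +infinity); "inf <= eps" unfolded *)
Definition fatten (F : R -> Prop) (eps : R) : R -> Prop :=
  fun x => forall delta, delta > 0 -> exists y, F y /\ Rabs (x - y) < eps + delta.

Definition in_unit_ball {A : CstarAlgebra} (b : nat -> A) : Prop :=
  forall k, norm (b k) <= 1.

Definition countably_qf_saturated (A : CstarAlgebra) : Prop :=
  forall (P : nat -> spoly A) (K : nat -> R -> Prop),
    (forall n, compact (K n)) ->
    ((exists b : nat -> A, in_unit_ball b /\ forall n, K n (norm (peval b (P n))))
     <->
     (forall m : nat, (m >= 1)%nat ->
        exists b : nat -> A, in_unit_ball b /\
          forall n, (n <= m)%nat -> fatten (K n) (/ INR m) (norm (peval b (P n))))).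

(* Main.v *)
Require Import Defs.
From Stdlib Require Import Reals List.
From Stdlib Require Import Lra Psatz Rtopology Lia.
Open Scope R_scope.

Definition m1 : Cpx := mkC (-1) 0.

Lemma add_zero_l (A : CstarAlgebra) (x : A) : add zero x = x.
Proof. rewrite add_comm; apply add_zero. Qed.

Lemma opp_unique (A : CstarAlgebra) (x y : A) : add x y = zero -> y = opp x.
Proof.
  intro H.
  transitivity (add (add (opp x) x) y).
  - rewrite (add_comm _ (opp x) x), add_opp, add_zero_l; reflexivity.
  - rewrite <- add_assoc, H, add_zero; reflexivity.
Qed.

Lemma add_cancel (A : CstarAlgebra) (a : A) : add a a = a -> a = zero.
Proof.
  intro H. transitivity (add (add a a) (opp a)).
  - rewrite <- add_assoc, add_opp, add_zero; reflexivity.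
  - rewrite H; apply add_opp.
Qed.

Lemma scal0 (A : CstarAlgebra) (x : A) : scal C0 x = zero.
Proof.
  apply add_cancel. rewrite <- scal_addl. f_equal.
  unfold Cadd, C0; simpl; f_equal; ring.
Qed.

Lemma opp_scal (A : CstarAlgebra) (x : A) : opp x = scal m1 x.
Proof.
  symmetry; apply opp_unique.
  rewrite <- (scal_one A x) at 1. rewrite <- scal_addl.
  replace (Cadd Defs.C1 m1) with C0 by (unfold Cadd, C0, Defs.C1, m1; simpl; f_equal; ring).
  apply scal0.
Qed.

Lemma Cabs0 : Cabs C0 = 0.
Proof. unfold Cabs, C0; simpl. replace (0*0+0*0) with 0 by ring. apply sqrt_0. Qed.

Lemma Cabsm1 : Cabs m1 = 1.
Proof. unfold Cabs, m1; simpl. replace (-1 * -1 + 0*0) with 1 by ring. apply sqrt_1. Qed.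

Lemma norm_zero (A : CstarAlgebra) : norm (@zero A) = 0.
Proof. rewrite <- (scal0 A zero), norm_scal, Cabs0; ring. Qed.

Lemma norm_opp (A : CstarAlgebra) (x : A) : norm (opp x) = norm x.
Proof. rewrite opp_scal, norm_scal, Cabsm1; ring. Qed.

Lemma norm_nonneg (A : CstarAlgebra) (x : A) : 0 <= norm x.
Proof.
  pose proof (norm_triangle A x (opp x)) as H.
  rewrite add_opp, norm_zero, norm_opp in H. lra.
Qed.

Lemma sub_chain (A : CstarAlgebra) (x y z : A) : add (sub x y) (sub y z) = sub x z.
Proof.
  unfold sub. rewrite <- add_assoc. f_equal.
  rewrite add_assoc, (add_comm _ (opp y) y), add_opp, add_zero_l. reflexivity.
Qed.

Lemma sub_tri (A : CstarAlgebra) (x y z : A) :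
  norm (sub x z) <= norm (sub x y) + norm (sub y z).
Proof. rewrite <- (sub_chain A x y z). apply norm_triangle. Qed.

Lemma sub_sym (A : CstarAlgebra) (x y : A) : norm (sub x y) = norm (sub y x).
Proof.
  assert (H : sub y x = opp (sub x y)).
  { apply opp_unique. rewrite sub_chain. unfold sub. apply add_opp. }
  rewrite H, norm_opp. reflexivity.
Qed.

Lemma mul_sub_l (A : CstarAlgebra) (u b d : A) : mul u (sub b d) = sub (mul u b) (mul u d).
Proof. unfold sub. rewrite mul_addr, !opp_scal, mul_scalr. reflexivity. Qed.

Lemma mul_sub_r (A : CstarAlgebra) (u b d : A) : mul (sub b d) u = sub (mul b u) (mul d u).
Proof. unfold sub. rewrite mul_addl, !opp_scal, mul_scall. reflexivity. Qed.

Lemma opp_opp (A : CstarAlgebra) (x : A) : opp (opp x) = x.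
Proof. symmetry. apply opp_unique. rewrite add_comm. apply add_opp. Qed.

Lemma sub_eq0 (A : CstarAlgebra) (x y : A) : sub x y = zero -> x = y.
Proof.
  intro H. apply opp_unique in H.
  rewrite <- (opp_opp A x), <- H, opp_opp. reflexivity.
Qed.

Lemma norm_le_all (A : CstarAlgebra) (x : A) : (forall eps, eps > 0 -> norm x < eps) -> x = zero.
Proof.
  intro H. apply norm_eq0. pose proof (norm_nonneg A x).
  destruct (Rle_lt_or_eq_dec 0 (norm x) H0) as [Hl|Hl]; [|auto].
  specialize (H (norm x) Hl). lra.
Qed.

Lemma unit_norm (A : CstarAlgebra) (e : A) : is_unit e -> norm e <= 1.
Proof.
  intro He.
  assert (Hs : star e = e).
  { assert (H1 : mul (star e) e = star e) by apply (proj2 (He (star e))).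
    assert (H2 : star (mul (star e) e) = mul (star e) e).
    { rewrite star_mul, star_invol. reflexivity. }
    rewrite H1, star_invol in H2. congruence. }
  pose proof (norm_cstar A e) as H. rewrite Hs, (proj1 (He e)) in H.
  pose proof (norm_nonneg A e). nra.
Qed.

Lemma unitary_norm (A : CstarAlgebra) (e u : A) : is_unit e -> unitary e u ->
  norm u <= 1 /\ norm (star u) <= 1.
Proof.
  intros He [H1 H2]. pose proof (unit_norm A e He).
  pose proof (norm_cstar A u) as Ha. pose proof (norm_cstar A (star u)) as Hb.
  rewrite star_invol in Hb. rewrite H1 in Ha. rewrite H2 in Hb.
  pose proof (norm_nonneg A u). pose proof (norm_nonneg A (star u)).
  split; nra.
Qed.

Lemma conj_bound (A : CstarAlgebra) (e v a b : A) : is_unit e -> unitary e v ->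
  norm (sub (mul (mul v a) (star v)) (mul (mul v b) (star v))) <= norm (sub a b).
Proof.
  intros He Hv. destruct (unitary_norm A e v He Hv) as [N1 N2].
  rewrite <- mul_sub_r, <- mul_sub_l.
  pose proof (norm_mul A (mul v (sub a b)) (star v)).
  pose proof (norm_mul A v (sub a b)).
  pose proof (norm_nonneg A v). pose proof (norm_nonneg A (star v)).
  pose proof (norm_nonneg A (sub a b)). pose proof (norm_nonneg A (mul v (sub a b))).
  nra.
Qed.

Theorem mainTheorem16 (C : CstarAlgebra) (e : C) (B : C -> Prop) (Phi : C -> C) :
  is_unit e ->
  countably_qf_saturated C ->
  cstar_subalgebra B ->
  separable_set B ->
  injective_star_hom B Phi ->
  approx_inner e B Phi ->
  exists u : C, unitary e u /\ forall b, B b -> Phi b = mul (mul u b) (star u).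
Proof.
  intros He Hsat _ [d [Hd Hdense]] _ Hai.
  set (P := fun n : nat => match n with
    | O => PAdd C (PMul C (PStar C (PVar C 0)) (PVar C 0)) (PScal C m1 (PCst C e))
    | S O => PAdd C (PMul C (PVar C 0) (PStar C (PVar C 0))) (PScal C m1 (PCst C e))
    | S (S k) => PAdd C (PCst C (Phi (d k)))
        (PScal C m1 (PMul C (PMul C (PVar C 0) (PCst C (d k))) (PStar C (PVar C 0))))
    end).
  set (K := fun (_ : nat) (r : R) => 0 <= r <= 0).
  assert (Hcomp : forall n, compact (K n)) by (intro; apply compact_P3).
  destruct (proj2 (Hsat P K Hcomp)) as [b [Hb HK]].
  - intros m Hm.
    assert (Hmpos : / INR m > 0).
    { apply Rinv_0_lt_compat. apply lt_0_INR. lia. }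
    destruct (Hai (/ INR m) Hmpos (map d (seq 0 (S m)))) as [v [Hv Hvb]].
    { intros a Ha. apply in_map_iff in Ha. destruct Ha as [k [<- _]]. apply Hd. }
    exists (fun _ => v). split.
    + intro k. apply (unitary_norm C e v He Hv).
    + intros n Hn. intros delta Hdelta. exists 0. split. { unfold K; lra. }
      rewrite Rminus_0_r.
      assert (Hlt : norm (peval (fun _ => v) (P n)) < / INR m).
      { destruct Hv as [Hv1 Hv2].
        destruct n as [|[|k]]; simpl; rewrite <- opp_scal; fold (sub (A:=C)).
        - rewrite Hv1. unfold sub; rewrite add_opp, norm_zero. lra.
        - rewrite Hv2. unfold sub; rewrite add_opp, norm_zero. lra.
        - apply Hvb. apply in_map. apply in_seq. lia. }
      rewrite Rabs_pos_eq by apply norm_nonneg. lra.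
  - set (u := b 0%nat).
    assert (Hz : forall n, peval b (P n) = zero).
    { intro n. apply norm_eq0. destruct (HK n); lra. }
    assert (Hu : unitary e u).
    { split; apply sub_eq0; unfold sub; rewrite opp_scal;
        [apply (Hz 0%nat) | apply (Hz 1%nat)]. }
    assert (Hdn : forall k, Phi (d k) = mul (mul u (d k)) (star u)).
    { intro k. apply sub_eq0. unfold sub. rewrite opp_scal. apply (Hz (S (S k))). }
    exists u. split; [exact Hu|].
    intros x Hx. apply sub_eq0, norm_le_all. intros eps Heps.
    destruct (Hdense x Hx (eps/5)) as [n Hn]; [lra|].
    destruct (Hai (eps/5) ltac:(lra) (x :: d n :: nil)) as [v [Hv Hvb]].
    { intros a [<-|[<-|[]]]; auto. }
    assert (H1 := Hvb x ltac:(simpl; auto)).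
    assert (H2 := Hvb (d n) ltac:(simpl; auto)).
    pose proof (conj_bound C e v x (d n) He Hv) as H3.
    pose proof (conj_bound C e u (d n) x He Hu) as H4.
    rewrite Hdn, sub_sym in H2.
    set (W1 := mul (mul v x) (star v)) in *.
    set (W2 := mul (mul v (d n)) (star v)) in *.
    set (W3 := mul (mul u (d n)) (star u)) in *.
    set (W4 := mul (mul u x) (star u)) in *.
    pose proof (sub_tri C (Phi x) W1 W4) as T1.
    pose proof (sub_tri C W1 W2 W4) as T2.
    pose proof (sub_tri C W2 W3 W4) as T3.
    pose proof (sub_sym C (d n) x). lra.
Qed.
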